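(* Let $1\le r\le s\le t$ and let $u=ABCd$, $v=A'B'C'd'$ be vertices of $E3C(r,s,t)$ with $A\ne A'$, $B\ne B'$, $C\ne C'$ and $d=d'$ (any $d\in\{0,1,2\}$). Then there exist $2r+2$ pairwise internally disjoint $u$–$v$ paths in $E3C(r,s,t)$, each of length at most $r+s+t+4$.
   Context: The exchanged 3-ary $n$-cube $E3C(r,s,t)$ ($r,s,t\ge1$, $n=r+s+t+1$): vertices are strings written $x=ABCd$ with $A\in\{0,1,2\}^r$, $B\in\{0,1,2\}^s$, $C\in\{0,1,2\}^t$, $d\in\{0,1,2\}$. Two distinct vertices $x=ABCd$, $y=A'B'C'd'$ are adjacent iff one of: (E0) $A=A',B=B',C=C'$ and $d\ne d'$; (E1) $d=d'=0$, $A=A'$, $B=B'$ and $C,C'$ differ in exactly one position; (E2) $d=d'=1$, $A=A'$, $C=C'$ and $B,B'$ differ in exactly one position; (E3) $d=d'=2$, $B=B'$, $C=C'$ and $A,A'$ differ in exactly one position. Paths are internally disjoint if they share no vertices other than their endpoints; length = number of edges. *)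

(* Defs.v *)
From mathcomp Require Import all_boot.
Set Implicit Arguments. Unset Strict Implicit. Unset Printing Implicit Defensive.

Definition E3Cvert (r s t : nat) : finType :=
  (r.-tuple 'I_3 * s.-tuple 'I_3 * t.-tuple 'I_3 * 'I_3)%type.

Definition vA {r s t} (x : E3Cvert r s t) : r.-tuple 'I_3 := x.1.1.1.
Definition vB {r s t} (x : E3Cvert r s t) : s.-tuple 'I_3 := x.1.1.2.
Definition vC {r s t} (x : E3Cvert r s t) : t.-tuple 'I_3 := x.1.2.
Definition vd {r s t} (x : E3Cvert r s t) : 'I_3 := x.2.

Definition hdist {n} (a b : n.-tuple 'I_3) : nat :=
  #|[set i : 'I_n | tnth a i != tnth b i]|.

Definition i0 : 'I_3 := @Ordinal 3 0 isT.
Definition i1 : 'I_3 := @Ordinal 3 1 isT.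
Definition i2 : 'I_3 := @Ordinal 3 2 isT.

Definition E3Cadj (r s t : nat) : rel (E3Cvert r s t) := fun x y =>
  [|| [&& vA x == vA y, vB x == vB y, vC x == vC y & vd x != vd y],
      [&& vd x == i0, vd y == i0, vA x == vA y, vB x == vB y & hdist (vC x) (vC y) == 1],
      [&& vd x == i1, vd y == i1, vA x == vA y, vC x == vC y & hdist (vB x) (vB y) == 1]
    | [&& vd x == i2, vd y == i2, vB x == vB y, vC x == vC y & hdist (vA x) (vA y) == 1]].

(* A u-v path is represented by the sequence p of vertices after u, so the
   path is u :: p; it is a simple path ending at v. *)
Definition is_path {r s t} (u v : E3Cvert r s t) (p : seq (E3Cvert r s t)) : bool :=
  [&& path (@E3Cadj r s t) u p, last u p == v & uniq (u :: p)].

Definition interior {r s t} (u : E3Cvert r s t) (p : seq (E3Cvert r s t))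
  : seq (E3Cvert r s t) := behead (belast u p).
(* the length (number of edges) of the path u :: p is size p *)

(* Main.v *)
Require Import Defs.
From mathcomp Require Import all_boot zify.
Set Implicit Arguments. Unset Strict Implicit. Unset Printing Implicit Defensive.

Section Gen.
Variable n : nat.
Implicit Types a b x y : n.-tuple 'I_3.

Definition upd1 a (i : 'I_n) (v : 'I_3) : n.-tuple 'I_3 :=
  [tuple if k == i then v else tnth a k | k < n].
Definition upds a b (S : seq 'I_n) : n.-tuple 'I_3 :=
  [tuple if k \in S then tnth b k else tnth a k | k < n].

Fixpoint ph a b (o : seq 'I_n) : seq (n.-tuple 'I_3) :=
  match o with
  | [::] => [::]
  | i :: o' => if tnth a i == tnth b i then ph a b o'
               else upd1 a i (tnth b i) :: ph (upd1 a i (tnth b i)) b o'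
  end.

Lemma tnth_upd1 a i v k : tnth (upd1 a i v) k = if k == i then v else tnth a k.
Proof. by rewrite tnth_mktuple. Qed.

Lemma tnth_upds a b S k : tnth (upds a b S) k = if k \in S then tnth b k else tnth a k.
Proof. by rewrite tnth_mktuple. Qed.

Lemma hdist_upd1 a i v : tnth a i != v -> hdist a (upd1 a i v) = 1.
Proof.
move=> H; rewrite /hdist (_ : [set _ | _] = [set i]) ?cards1 //.
apply/setP=> k; rewrite !inE tnth_upd1; case: ifP => [/eqP ->|Hk];
by rewrite ?eqxx ?H ?Hk.
Qed.

Lemma hdist0 a b : hdist a b = 0 -> a = b.
Proof.
move/eqP; rewrite cards_eq0 => /eqP H; apply: eq_from_tnth => i.
apply/eqP; apply/negPn/negP => Hi.
have : i \in [set k | tnth a k != tnth b k] by rewrite inE.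
by rewrite H inE.
Qed.

Lemma hdistxx a : hdist a a = 0.
Proof. by apply/eqP; rewrite cards_eq0; apply/eqP/setP=> k; rewrite !inE eqxx. Qed.

Lemma hdist_lt a b i : tnth a i != tnth b i -> hdist (upd1 a i (tnth b i)) b < hdist a b.
Proof.
move=> H; apply: proper_card; apply/properP; split.
  by apply/subsetP => k; rewrite !inE tnth_upd1; case: ifP => [/eqP ->|]; rewrite ?eqxx.
by exists i; rewrite !inE ?tnth_upd1 ?eqxx.
Qed.

Lemma ph_path a b o : path (fun x y => hdist x y == 1) a (ph a b o).
Proof.
elim: o a => //= i o IH a; case: ifP => H //=.
by rewrite hdist_upd1 ?H // IH.
Qed.

Lemma ph_last a b o : (forall i, tnth a i != tnth b i -> i \in o) -> last a (ph a b o) = b.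
Proof.
elim: o a => [|i o IH] a /= Ho.
  by apply: eq_from_tnth => k; apply/eqP; apply/negPn/negP => /Ho.
case: ifP => H /=; apply: IH => k Hk.
  move: (Ho k Hk); rewrite inE => /orP [/eqP Eki|//].
  by move: Hk; rewrite Eki (eqP H) eqxx.
move: Hk; rewrite tnth_upd1; case: ifP => [/eqP ->|Hki Hk]; first by rewrite eqxx.
by move: (Ho k Hk); rewrite inE Hki.
Qed.

Lemma ph_size a b o : size (ph a b o) <= size o.
Proof. by elim: o a => //= i o IH a; case: ifP => _ /=; rewrite ?ltnS ?IH // (leq_trans (IH _)). Qed.

Lemma ph_lt a b o x : x \in ph a b o -> hdist x b < hdist a b.
Proof.
elim: o a => //= i o IH a; case: ifP => H; first exact: IH.
rewrite inE => /orP [/eqP ->|/IH Hx]; first by rewrite hdist_lt ?H.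
by rewrite (ltn_trans Hx) // hdist_lt ?H.
Qed.

Lemma ph_uniq a b o : uniq (a :: ph a b o).
Proof.
elim: o a => //= i o IH a; case: ifP => H //=.
rewrite IH andbT inE negb_or; apply/andP; split.
  apply/eqP => E; have := hdist_lt (negbT H); by rewrite -E ltnn.
apply/negP => /ph_lt; rewrite ltnNge => /negP; apply; exact: ltnW (hdist_lt (negbT H)).
Qed.

Lemma upds_nil a b : upds a b [::] = a.
Proof. by apply: eq_from_tnth => k; rewrite tnth_upds. Qed.

Lemma ph_take a b o x : x \in a :: ph a b o -> exists m, x = upds a b (take m o).
Proof.
elim: o a => [|i o IH] a /=.
  by rewrite inE => /eqP ->; exists 0; rewrite upds_nil.
case: ifP => H.
  move/IH => [m ->]; exists m.+1; apply: eq_from_tnth => k; rewrite !tnth_upds /= inE.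
  by case: eqP => // ->; case: ifP => //; rewrite (eqP H).
rewrite inE => /orP [/eqP ->|/IH [m ->]]; first by exists 0; rewrite upds_nil.
exists m.+1; apply: eq_from_tnth => k; rewrite !tnth_upds /= inE tnth_upd1.
by case: eqP => // ->; case: ifP.
Qed.

End Gen.
Definition rk p j i := if j < i then i - j.+1 else i + p - j.+1.
Lemma modE p x : x < p.*2 -> x %% p = if x < p then x else x - p.
Proof.
move=> H2; case: (ltnP x p) => H1; first by rewrite modn_small.
by rewrite -{1}(subnK H1) modnDr modn_small //; lia.
Qed.
Lemma t1 p j c : j < p -> c < p -> rk p j ((j.+1 + c) %% p) = c.
Proof. move=> *; rewrite /rk modE; last lia. by case: (ltnP (j.+1+c) p) => ?; case: ifP => ?; lia. Qed.
Lemma t2 p j (i:nat) : j < p -> i < p -> (j.+1 + rk p j i) %% p = i.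
Proof. move=> *; rewrite /rk; case: ifP => ?; rewrite modE; try lia; case: ifP => ?; lia. Qed.
Lemma t4 p j j' i : j < p -> j' < p -> i < p -> j != j' ->
  rk p j j' < rk p j i -> rk p j' j < rk p j' i -> False.
Proof. move=> ? ? ? ?; rewrite /rk; repeat case: ifP => ?; lia. Qed.

Definition o3 (x : 'I_3) (k : nat) : 'I_3 := Ordinal (ltn_pmod (x + k) (isT : 0 < 3)).

Lemma o3_neq x k : 0 < k < 3 -> o3 x k != x.
Proof. move=> Hk; apply/eqP => /(congr1 val) /=; rewrite modE; case: x => x Hx /=; try lia.
case: ifP => ?; lia. Qed.

Lemma o3_inj x k k' : 0 < k < 3 -> 0 < k' < 3 -> o3 x k = o3 x k' -> k = k'.
Proof. move=> Hk Hk' /(congr1 val) /=; case: x => x Hx /=; rewrite !modE; try lia.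
by do 2 case: ifP => ?; lia. Qed.

Ltac sep := match goal with
 | H : is_true (_ != _), E : _ = _ |- _ => solve [move: (H); rewrite E eqxx; done | move: (H); rewrite -E eqxx; done]
 end.

Section Core.
Variables (p q w r : nat).
Hypotheses (r_gt0 : 0 < r) (rp : r <= p).
Variables (A A' : p.-tuple 'I_3) (B B' : q.-tuple 'I_3) (C C' : w.-tuple 'I_3).
Hypotheses (HA : A != A') (HB : B != B') (HC : C != C').
Local Notation V := (E3Cvert p q w).
Local Notation adj := (@E3Cadj p q w).
Lemma p_gt0 : 0 < p. Proof. exact: leq_trans r_gt0 rp. Qed.

Definition tag (j k : nat) : p.-tuple 'I_3 :=
  [tuple if val i == j then o3 (tnth A i) k else tnth A i | i < p].
Definition cyc (j : nat) : seq 'I_p :=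
  [seq Ordinal (ltn_pmod (j.+1 + c) p_gt0) | c <- iota 0 p].

Definition uu : V := (A,B,C,i2).
Definition vv : V := (A',B',C',i2).

Lemma adjE0 (a : p.-tuple 'I_3) b c d d' : d != d' -> adj (a,b,c,d) (a,b,c,d').
Proof. by move=> H; rewrite /E3Cadj /vA /vB /vC /vd /= !eqxx H. Qed.
Lemma adjA a a' (b : q.-tuple 'I_3) (c : w.-tuple 'I_3) :
  hdist a a' == 1 -> adj (a,b,c,i2) (a',b,c,i2).
Proof. by move=> H; rewrite /E3Cadj /vA /vB /vC /vd /= !eqxx H !orbT. Qed.
Lemma adjB (a : p.-tuple 'I_3) b b' (c : w.-tuple 'I_3) :
  hdist b b' == 1 -> adj (a,b,c,i1) (a,b',c,i1).
Proof. by move=> H; rewrite /E3Cadj /vA /vB /vC /vd /= !eqxx H !orbT. Qed.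
Lemma adjC (a : p.-tuple 'I_3) (b : q.-tuple 'I_3) c c' :
  hdist c c' == 1 -> adj (a,b,c,i0) (a,b,c',i0).
Proof. by move=> H; rewrite /E3Cadj /vA /vB /vC /vd /= !eqxx H !orbT. Qed.


Ltac kill := case=> *; first [discriminate | sep].

Lemma tag_tnth j k i : tnth (tag j k) i = if val i == j then o3 (tnth A i) k else tnth A i.
Proof. by rewrite tnth_mktuple. Qed.

Lemma tag_upd j k (hj : j < p) : tag j k = upd1 A (Ordinal hj) (o3 (tnth A (Ordinal hj)) k).
Proof.
apply: eq_from_tnth => i; rewrite tag_tnth tnth_upd1.
case: ifP => H; case: ifP => H' //.
- by congr o3; congr tnth; apply: val_inj; rewrite /= (eqP H).
- by move: H'; rewrite -(inj_eq val_inj) /= H.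
- by move: H; rewrite (eqP H') /= eqxx.
Qed.

Lemma hdist_tag j k : j < p -> 0 < k < 3 -> hdist A (tag j k) = 1.
Proof. by move=> hj hk; rewrite (tag_upd k hj) hdist_upd1 // eq_sym o3_neq. Qed.

Lemma tag_neqA j k : j < p -> 0 < k < 3 -> tag j k != A.
Proof. by move=> hj hk; apply/eqP => E; have := hdist_tag hj hk; rewrite E hdistxx. Qed.

Lemma tag_neqA' j k : j < p -> 0 < k < 3 -> hdist A A' != 1 -> tag j k != A'.
Proof. by move=> hj hk H; apply/eqP => E; move: H; rewrite -E hdist_tag. Qed.

Lemma tag_inj j k j' k' : j < p -> j' < p -> 0 < k < 3 -> 0 < k' < 3 ->
  tag j k = tag j' k' -> j = j' /\ k = k'.
Proof.
move=> hj hj' hk hk' /(congr1 (fun X => tnth X (Ordinal hj))); rewrite !tag_tnth /= eqxx.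
case: eqP => [<- /(o3_inj hk hk') //|_ E].
by move: (o3_neq (tnth A (Ordinal hj)) hk); rewrite E eqxx.
Qed.

Lemma piece n (f : n.-tuple 'I_3 -> V) x a b o :
  adj x (f a) -> (forall y z, hdist y z == 1 -> adj (f y) (f z)) -> (forall i, i \in o) ->
  path adj x (map f (a :: ph a b o)) && (last x (map f (a :: ph a b o)) == f b).
Proof.
move=> H1 H2 H3; rewrite /= H1 path_map last_map ph_last // eqxx andbT.
by apply: (sub_path _ (ph_path a b o)) => y z /H2.
Qed.

Lemma pcat x l1 l2 y1 y2 :
  path adj x l1 && (last x l1 == y1) -> path adj y1 l2 && (last y1 l2 == y2) ->
  path adj x (l1 ++ l2) && (last x (l1 ++ l2) == y2).
Proof. by case/andP=> P1 /eqP L1 /andP [P2 L2]; rewrite cat_path last_cat L1 P1 P2. Qed.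

Lemma pone x y : adj x y -> path adj x [:: y] && (last x [:: y] == y).
Proof. by move=> H; rewrite /= H eqxx. Qed.

Lemma uniq_piece n (f : n.-tuple 'I_3 -> V) a b o : injective f -> uniq (map f (a :: ph a b o)).
Proof. by move=> fi; rewrite map_inj_uniq // ph_uniq. Qed.

Lemma disj n m (f : n.-tuple 'I_3 -> V) (g : m.-tuple 'I_3 -> V) s t :
  (forall x y, f x = g y -> False) -> ~~ has (mem (map f s)) (map g t).
Proof. by move=> H; apply/hasPn => y /mapP [c _ ->]; apply/mapP => [[c' _ /esym /H]]. Qed.

Lemma notin n (f : n.-tuple 'I_3 -> V) z s : (forall y, z = f y -> False) -> z \notin map f s.
Proof. by move=> H; apply/mapP => [[c _ /H]]. Qed.

Lemma mem_all n (i : 'I_n) : i \in enum 'I_n.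
Proof. by rewrite mem_enum. Qed.

Lemma mem_take_cyc j m i : j < p -> (i \in take m (cyc j)) = (rk p j i < m).
Proof.
move=> hj; rewrite /cyc -map_take take_iota; apply/mapP/idP.
  move=> [c]; rewrite mem_iota add0n => /andP [_ Hc] ->; rewrite /= t1 //; lia.
move=> H; exists (rk p j i).
  rewrite mem_iota add0n leq0n /= leq_min H /rk; case: i {H} => i Hi /=; case: ifP => ?; lia.
by apply: val_inj; rewrite /= t2.
Qed.

Lemma mem_cyc j i : j < p -> i \in cyc j.
Proof.
move=> hj; have := mem_take_cyc p i hj; rewrite take_oversize ?size_map ?size_iota // => ->.
by rewrite /rk; case: i => i Hi /=; case: ifP => ?; lia.
Qed.

Lemma neq_ex n (x y : n.-tuple 'I_3) : x != y -> exists i, tnth x i != tnth y i.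
Proof.
move=> H; have : ~~ [forall i, tnth x i == tnth y i].
  by apply: contra H => /forallP E; apply/eqP/eq_from_tnth => i; apply/eqP/E.
by rewrite negb_forall => /existsP.
Qed.

Lemma fan_j j k x (hj : j < p) : 0 < k < 3 ->
  x \in tag j k :: ph (tag j k) A' (cyc j) -> x != A' ->
  tnth x (Ordinal hj) = o3 (tnth A (Ordinal hj)) k.
Proof.
move=> hk /ph_take [m ->] Hx; have [i Hi] := neq_ex Hx.
move: Hi; rewrite !tnth_upds mem_take_cyc //; case: ifP => [_|Hi _]; first by rewrite eqxx.
rewrite mem_take_cyc // tag_tnth /= eqxx; case: ifP => // H.
move: Hi H; rewrite /rk ltnn; case: i => i ip /=; case: ifP => ? H1 H2; exfalso; lia.
Qed.

Lemma fan_disj j k j' k' x : j < p -> j' < p -> 0 < k < 3 -> 0 < k' < 3 ->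
  x \in tag j k :: ph (tag j k) A' (cyc j) ->
  x \in tag j' k' :: ph (tag j' k') A' (cyc j') -> x != A' -> j = j' /\ k = k'.
Proof.
move=> hj hj' hk hk' X1 X2 Hx.
have F1 := fan_j hj hk X1 Hx; have F2 := fan_j hj' hk' X2 Hx.
case: (eqVneq j j') => [E|Ejj].
  subst j'; split=> //; apply: (@o3_inj (tnth A (Ordinal hj)) _ _ hk hk').
  have E : Ordinal hj' = Ordinal hj by apply: val_inj.
  by rewrite E in F2; rewrite -F1 -F2.
exfalso.
move: X1 X2 => /ph_take [m E1] /ph_take [m' E2].
have [i Hi] := neq_ex Hx.
have G1 : ~~ (rk p j i < m).
  by move: Hi; rewrite E1 tnth_upds mem_take_cyc //; case: ifP => //; rewrite eqxx.
have G2 : ~~ (rk p j' i < m').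
  by move: Hi; rewrite E2 tnth_upds mem_take_cyc //; case: ifP => //; rewrite eqxx.
have G3 : rk p j' j < m'.
  move: F1; rewrite E2 tnth_upds mem_take_cyc //= tag_tnth /= (negbTE Ejj).
  by case: ifP => // _ /esym/eqP; rewrite (negbTE (o3_neq _ hk)).
have G4 : rk p j j' < m.
  move: F2; rewrite E1 tnth_upds mem_take_cyc //= tag_tnth /= eq_sym (negbTE Ejj).
  by case: ifP => // _ /esym/eqP; rewrite (negbTE (o3_neq _ hk')).
apply: (@t4 p j j' i) => //; rewrite -ltnNge in G1 G2; lia.
Qed.


Definition Ptag j k : seq V :=
  (tag j k,B,C,i2) :: [seq (tag j k,B,c,i0) | c <- C :: ph C C' (enum 'I_w)] ++
  ([seq (tag j k,b,C',i1) | b <- B :: ph B B' (enum 'I_q)] ++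
   [seq (a,B',C',i2) | a <- tag j k :: ph (tag j k) A' (cyc j)]).

Lemma Ucons (x : V) l : x \notin l -> uniq l -> uniq (x :: l).
Proof. by move=> H1 H2; rewrite /= H1 H2. Qed.
Lemma Ucat (l1 l2 : seq V) : uniq l1 -> uniq l2 -> ~~ has (mem l1) l2 -> uniq (l1 ++ l2).
Proof. by move=> H1 H2 H3; rewrite cat_uniq H1 H2 H3. Qed.
Lemma Ncons (x y : V) l : x != y -> x \notin l -> x \notin y :: l.
Proof. by move=> H1 H2; rewrite in_cons negb_or H1 H2. Qed.
Lemma Ncat (x : V) l1 l2 : x \notin l1 -> x \notin l2 -> x \notin l1 ++ l2.
Proof. by move=> H1 H2; rewrite mem_cat negb_or H1 H2. Qed.
Lemma Hcat (l l1 l2 : seq V) : ~~ has (mem l) l1 -> ~~ has (mem l) l2 -> ~~ has (mem l) (l1 ++ l2).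
Proof. by move=> H1 H2; rewrite has_cat negb_or H1 H2. Qed.
Lemma Hcat' (l l1 l2 : seq V) : ~~ has (mem l1) l -> ~~ has (mem l2) l -> ~~ has (mem (l1 ++ l2)) l.
Proof.
by move=> H1 H2; rewrite has_sym; apply: Hcat; rewrite has_sym.
Qed.
Lemma Hone (x : V) (l : seq V) : x \notin l -> ~~ has (mem l) [:: x].
Proof. by rewrite /= orbF. Qed.

Ltac inj := let E := fresh "E" in intros ? ? E; injection E; intros; subst; reflexivity.
Ltac uniq_tac :=
  do 4 rewrite ?cons_uniq ?cat_uniq ?mem_cat ?negb_or ?has_cat ?in_cons;
  repeat (apply/andP; split);
  try (apply: uniq_piece; inj);
  try (apply: disj => ? ? ; kill);
  try (apply: notin => ?; kill);
  try (apply/eqP; kill).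

Lemma Ptag_ok j k : j < p -> 0 < k < 3 ->
  is_path uu vv (Ptag j k) /\ size (Ptag j k) <= p + q + w + 4.
Proof.
move=> hj hk; have Hn := tag_neqA hj hk; split.
  have P : path adj uu (Ptag j k) && (last uu (Ptag j k) == vv).
    rewrite /Ptag -cat1s; apply: (pcat (y1 := (tag j k,B,C,i2))).
      by apply: pone; apply: adjA; rewrite hdist_tag.
    apply: pcat; first (apply: piece; [exact: adjE0 | move=> ? ?; exact: adjC | exact: mem_all]).
    apply: pcat; first (apply: piece; [exact: adjE0 | move=> ? ?; exact: adjB | exact: mem_all]).
    apply: piece; [exact: adjE0 | move=> ? ?; exact: adjA | move=> i; exact: mem_cyc].
  case/andP: P => P1 P2; apply/and3P; split => //.
  rewrite /uu /Ptag; apply: Ucons; [apply: Ncons; [|apply: Ncat; [|apply: Ncat]]|apply: Ucons; [apply: Ncat; [|apply: Ncat]|apply: Ucat; [|apply: Ucat|apply: Hcat]]].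
  all: try solve [apply/eqP; kill | apply: notin => ?; kill | apply: uniq_piece; inj | apply: disj => ? ?; kill].
rewrite /Ptag /=; do 4 (rewrite ?size_cat ?size_map /=).
have := ph_size C C' (enum 'I_w); have := ph_size B B' (enum 'I_q).
have := ph_size (tag j k) A' (cyc j).
rewrite /cyc size_map size_iota !size_enum_ord; lia.
Qed.

Definition PE2 : seq V :=
  [seq (A,b,C,i1) | b <- B :: ph B B' (enum 'I_q)] ++
  ([seq (a,B',C,i2) | a <- A :: ph A A' (enum 'I_p)] ++
  ([seq (A',B',c,i0) | c <- C :: ph C C' (enum 'I_w)] ++ [:: vv])).
Definition PE1n : seq V :=
  [seq (A,B,c,i0) | c <- C :: ph C C' (enum 'I_w)] ++
  ([seq (a,B,C',i2) | a <- A :: ph A A' (enum 'I_p)] ++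
  ([seq (A',b,C',i1) | b <- B :: ph B B' (enum 'I_q)] ++ [:: vv])).
Definition PE1s : seq V :=
  [seq (A,B,c,i0) | c <- C :: ph C C' (enum 'I_w)] ++
  ([seq (A,b,C',i1) | b <- B :: ph B B' (enum 'I_q)] ++
   [seq (a,B',C',i2) | a <- A :: ph A A' (enum 'I_p)]).
Definition PE1 := if hdist A A' == 1 then PE1s else PE1n.

Ltac utac := first [ solve [apply: uniq_piece; inj] | solve [apply/eqP; kill]
  | solve [apply: notin => ?; kill] | solve [apply: disj => ? ?; kill] | done
  | apply: Ucat; utac | apply: Ucons; utac | apply: Ncat; utac | apply: Ncons; utac
  | apply: Hcat; utac | apply: Hone; utac ].

Ltac pc := first [exact: mem_all | exact: adjE0 | move=> ? ?; exact: adjA | move=> ? ?; exact: adjB | move=> ? ?; exact: adjC].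

Ltac sztac := do 5 (rewrite ?size_cat ?size_map /=);
  have := ph_size C C' (enum 'I_w); have := ph_size B B' (enum 'I_q);
  have := ph_size A A' (enum 'I_p); rewrite !size_enum_ord; lia.

Lemma PE2_ok : is_path uu vv PE2 /\ size PE2 <= p + q + w + 4.
Proof.
split; last by rewrite /PE2; sztac.
have P : path adj uu PE2 && (last uu PE2 == vv).
  apply: pcat; first (apply: piece; pc).
  apply: pcat; first (apply: piece; pc).
  apply: pcat; first (apply: piece; pc).
  by apply: pone; apply: adjE0.
case/andP: P => P1 P2; apply/and3P; split => //.
rewrite /uu /PE2 /vv; utac.
Qed.

Lemma PE1n_ok : is_path uu vv PE1n /\ size PE1n <= p + q + w + 4.
Proof.
split; last by rewrite /PE1n; sztac.
have P : path adj uu PE1n && (last uu PE1n == vv).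
  apply: pcat; first (apply: piece; pc).
  apply: pcat; first (apply: piece; pc).
  apply: pcat; first (apply: piece; pc).
  by apply: pone; apply: adjE0.
case/andP: P => P1 P2; apply/and3P; split => //.
rewrite /uu /PE1n /vv; utac.
Qed.

Lemma PE1s_ok : is_path uu vv PE1s /\ size PE1s <= p + q + w + 4.
Proof.
split; last by rewrite /PE1s; sztac.
have P : path adj uu PE1s && (last uu PE1s == vv).
  apply: pcat; first (apply: piece; pc).
  apply: pcat; first (apply: piece; pc).
  by apply: piece; pc.
case/andP: P => P1 P2; apply/and3P; split => //.
rewrite /uu /PE1s /vv; utac.
Qed.

Lemma mem_tag j k x : x \in Ptag j k -> [\/ x = (tag j k,B,C,i2), exists c, x = (tag j k,B,c,i0),
  exists b, x = (tag j k,b,C',i1) |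
  exists2 a, a \in tag j k :: ph (tag j k) A' (cyc j) & x = (a,B',C',i2)].
Proof.
rewrite /Ptag in_cons !mem_cat => /orP [/eqP ->|/orP [|/orP []]]; first by constructor 1.
- by move/mapP => [c _ ->]; constructor 2; exists c.
- by move/mapP => [b _ ->]; constructor 3; exists b.
- by move/mapP => [a Ha ->]; constructor 4; exists a.
Qed.

Lemma mem_E2 x : x \in PE2 -> [\/ x = vv, exists b, x = (A,b,C,i1),
  exists a, x = (a,B',C,i2) | exists c, x = (A',B',c,i0)].
Proof.
rewrite /PE2 !mem_cat => /orP [|/orP [|/orP []]].
- by move/mapP => [b _ ->]; constructor 2; exists b.
- by move/mapP => [a _ ->]; constructor 3; exists a.
- by move/mapP => [c _ ->]; constructor 4; exists c.
- by rewrite inE => /eqP ->; constructor 1.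
Qed.

Lemma mem_E1n x : x \in PE1n -> [\/ x = vv, exists c, x = (A,B,c,i0),
  exists a, x = (a,B,C',i2) | exists b, x = (A',b,C',i1)].
Proof.
rewrite /PE1n !mem_cat => /orP [|/orP [|/orP []]].
- by move/mapP => [c _ ->]; constructor 2; exists c.
- by move/mapP => [a _ ->]; constructor 3; exists a.
- by move/mapP => [b _ ->]; constructor 4; exists b.
- by rewrite inE => /eqP ->; constructor 1.
Qed.

Lemma mem_E1s x : hdist A A' = 1 -> x \in PE1s -> [\/ x = vv, exists c, x = (A,B,c,i0),
  exists b, x = (A,b,C',i1) | x = (A,B',C',i2)].
Proof.
move=> H1; rewrite /PE1s !mem_cat => /orP [|/orP []].
- by move/mapP => [c _ ->]; constructor 2; exists c.
- by move/mapP => [b _ ->]; constructor 3; exists b.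
move/mapP => [a]; rewrite in_cons => /orP [/eqP -> ->|Ha ->]; first by constructor 4.
constructor 1; have := ph_lt Ha; rewrite H1 ltnS leqn0 => /eqP /hdist0 ->; done.
Qed.

Ltac xtac Hv E2 := first [ by rewrite eqxx in Hv | by rewrite E2 eqxx in Hv | move: E2; kill ].

Lemma TT j k j' k' x : j < p -> j' < p -> 0 < k < 3 -> 0 < k' < 3 ->
  x \in Ptag j k -> x \in Ptag j' k' -> x != vv -> j = j' /\ k = k'.
Proof.
move=> hj hj' hk hk' X1 X2 Hv.
case: (mem_tag X1) => [E1|[c E1]|[b E1]|[a Ha E1]]; case: (mem_tag X2) => [E2|[c' E2]|[b' E2]|[a' Ha' E2]];
  subst x; try (move: E2; kill);
  try (move: E2 => /(congr1 (@vA p q w)) /= E; exact: tag_inj hj hj' hk hk' E).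
case: E2 => E; subst a'; apply: (fan_disj hj hj' hk hk' Ha Ha').
by apply: contra Hv => /eqP ->.
Qed.

Lemma TE2 j k x : j < p -> 0 < k < 3 -> x \in Ptag j k -> x \in PE2 -> x != vv -> False.
Proof.
move=> hj hk X1 X2 Hv.
case: (mem_tag X1) => [E1|[c E1]|[b E1]|[a Ha E1]]; case: (mem_E2 X2) => [E2|[c' E2]|[b' E2]|[a' E2]];
  subst x; xtac Hv E2.
Qed.

Lemma TE1n j k x : j < p -> 0 < k < 3 -> hdist A A' != 1 ->
  x \in Ptag j k -> x \in PE1n -> x != vv -> False.
Proof.
move=> hj hk hs X1 X2 Hv; have Hn := tag_neqA hj hk; have Hn' := tag_neqA' hj hk hs.
case: (mem_tag X1) => [E1|[c E1]|[b E1]|[a Ha E1]]; case: (mem_E1n X2) => [E2|[c' E2]|[b' E2]|[a' E2]];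
  subst x; xtac Hv E2.
Qed.

Lemma TE1s j k x : j < p -> 0 < k < 3 -> hdist A A' = 1 ->
  x \in Ptag j k -> x \in PE1s -> x != vv -> False.
Proof.
move=> hj hk hs X1 X2 Hv; have Hn := tag_neqA hj hk.
case: (mem_tag X1) => [E1|[c E1]|[b E1]|[a Ha E1]]; case: (mem_E1s hs X2) => [E2|[c' E2]|[b' E2]|E2];
  subst x; try xtac Hv E2.
case: E2 => E; subst a.
by move: (fan_j hj hk Ha HA) => /esym/eqP; rewrite (negbTE (o3_neq _ hk)).
Qed.

Lemma E1E2 x : x \in PE1 -> x \in PE2 -> x != vv -> False.
Proof.
rewrite /PE1; case: ifP => hs X1 X2 Hv.
  case: (mem_E1s (eqP hs) X1) => [E1|[c E1]|[b E1]|E1]; case: (mem_E2 X2) => [E2|[c' E2]|[b' E2]|[a' E2]];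
  subst x; xtac Hv E2.
case: (mem_E1n X1) => [E1|[c E1]|[a E1]|[b E1]]; case: (mem_E2 X2) => [E2|[c' E2]|[b' E2]|[a' E2]];
  subst x; xtac Hv E2.
Qed.

Lemma TE1 j k x : j < p -> 0 < k < 3 -> x \in Ptag j k -> x \in PE1 -> x != vv -> False.
Proof.
rewrite /PE1; case: ifP => hs hj hk X1 X2 Hv.
  exact: (TE1s hj hk (eqP hs) X1 X2 Hv).
exact: (TE1n hj hk (negbT hs) X1 X2 Hv).
Qed.



Definition Pf (i : nat) : seq V :=
  if i < 2 * r then Ptag i./2 (odd i).+1 else if i == 2 * r then PE1 else PE2.

Lemma half_lt i : i < 2 * r -> i./2 < p.
Proof. move=> H; have := odd_double_half i; rewrite -muln2; case: (odd i) => /=; lia. Qed.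

Lemma odd_k i : 0 < (odd i).+1 < 3.
Proof. by case: (odd i). Qed.

Lemma Pf_ok i : is_path uu vv (Pf i) /\ size (Pf i) <= p + q + w + 4.
Proof.
rewrite /Pf; case: ifP => H; first exact: Ptag_ok (half_lt H) (odd_k i).
case: ifP => _; last exact: PE2_ok.
rewrite /PE1; case: ifP => _; [exact: PE1s_ok | exact: PE1n_ok].
Qed.

Lemma Pf_disj i j x : i < 2 * r + 2 -> j < 2 * r + 2 -> i != j ->
  x \in Pf i -> x \in Pf j -> x != vv -> False.
Proof.
move=> Hi Hj Hij; rewrite /Pf.
case: (boolP (i < 2 * r)) => hi; case: (boolP (j < 2 * r)) => hj.
- move=> X1 X2 Hv; have [E1 E2] := TT (half_lt hi) (half_lt hj) (odd_k i) (odd_k j) X1 X2 Hv.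
  move: Hij; rewrite -(odd_double_half i) -(odd_double_half j) E1.
  by case: E2 => ->; rewrite eqxx.
- case: ifP => _ X1 X2 Hv; [exact: TE1 (half_lt hi) (odd_k i) X1 X2 Hv|exact: TE2 (half_lt hi) (odd_k i) X1 X2 Hv].
- case: ifP => _ X1 X2 Hv; [exact: TE1 (half_lt hj) (odd_k j) X2 X1 Hv|exact: TE2 (half_lt hj) (odd_k j) X2 X1 Hv].
- case: (boolP (i == 2 * r)) => /eqP hi'; case: (boolP (j == 2 * r)) => /eqP hj' X1 X2 Hv.
  + by move: Hij; rewrite hi' hj' eqxx.
  + exact: E1E2 X1 X2 Hv.
  + exact: E1E2 X2 X1 Hv.
  + exfalso; move: Hij => /eqP; lia.
Qed.

Lemma interior_mem (u v : V) l x : is_path u v l -> x \in interior u l -> (x \in l) && (x != v).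
Proof.
case/and3P => _ /eqP L U; rewrite /interior; case: l L U => [|y l] // L U /= Hx.
rewrite (mem_belast Hx) /=; move: U; rewrite cons_uniq => /andP [_].
rewrite lastI rcons_uniq; move: L => /= -> /andP [Hv _].
by apply: contraNneq Hv => <-.
Qed.

Theorem core : exists P : 'I_(2 * r + 2) -> seq V,
    (forall i, is_path uu vv (P i) /\ size (P i) <= p + q + w + 4) /\
    (forall i j, i != j -> forall x, x \in interior uu (P i) -> x \notin interior uu (P j)).
Proof.
exists (fun i => Pf i); split; first by move=> i; exact: Pf_ok.
move=> i j Hij x X1; apply/negP => X2.
case/andP: (interior_mem (proj1 (Pf_ok i)) X1) => M1 Hv.
case/andP: (interior_mem (proj1 (Pf_ok j)) X2) => M2 _.
exact: Pf_disj (ltn_ord i) (ltn_ord j) Hij M1 M2 Hv.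
Qed.
End Core.
Lemma I3 (d : 'I_3) : d = i0 \/ d = i1 \/ d = i2.
Proof. by case: d => [[|[|[|m]]] Hm] //; [left|right;left|right;right]; apply: val_inj. Qed.

Definition s0 (d : 'I_3) : 'I_3 := if d == i0 then i2 else if d == i2 then i0 else i1.
Definition s1 (d : 'I_3) : 'I_3 := if d == i1 then i2 else if d == i2 then i1 else i0.

Definition psi0 r s t (x : E3Cvert t s r) : E3Cvert r s t :=
  let: (a,b,c,d) := x in (c,b,a,s0 d).
Definition psi1 r s t (x : E3Cvert s r t) : E3Cvert r s t :=
  let: (a,b,c,d) := x in (b,a,c,s1 d).

Lemma psi0_adj r s t (x y : E3Cvert t s r) : E3Cadj x y -> E3Cadj (psi0 x) (psi0 y).
Proof.
case: x y => [[[a b] c] d] [[[a' b'] c'] d'].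
have [->|[->|->]] := I3 d; have [->|[->|->]] := I3 d';
rewrite /E3Cadj /vA /vB /vC /vd /=;
case: (a == a'); case: (b == b'); case: (c == c'); rewrite /= ?andbF ?orbF ?andbT //.
Qed.

Lemma psi1_adj r s t (x y : E3Cvert s r t) : E3Cadj x y -> E3Cadj (psi1 x) (psi1 y).
Proof.
case: x y => [[[a b] c] d] [[[a' b'] c'] d'].
have [->|[->|->]] := I3 d; have [->|[->|->]] := I3 d';
rewrite /E3Cadj /vA /vB /vC /vd /=;
case: (a == a'); case: (b == b'); case: (c == c'); rewrite /= ?andbF ?orbF ?andbT //.
Qed.

Lemma psi0_inj r s t : injective (@psi0 r s t).
Proof.
move=> [[[a b] c] d] [[[a' b'] c'] d'] /=; case=> -> -> ->.
by have [->|[->|->]] := I3 d; have [->|[->|->]] := I3 d'.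
Qed.

Lemma psi1_inj r s t : injective (@psi1 r s t).
Proof.
move=> [[[a b] c] d] [[[a' b'] c'] d'] /=; case=> -> -> ->.
by have [->|[->|->]] := I3 d; have [->|[->|->]] := I3 d'.
Qed.

Lemma transport p q w p' q' w' (f : E3Cvert p q w -> E3Cvert p' q' w') (u v : E3Cvert p q w) N bd :
  injective f -> (forall x y, E3Cadj x y -> E3Cadj (f x) (f y)) ->
  (exists P : 'I_N -> seq (E3Cvert p q w),
    (forall i, is_path u v (P i) /\ size (P i) <= bd) /\
    (forall i j, i != j -> forall x, x \in interior u (P i) -> x \notin interior u (P j))) ->
  exists P : 'I_N -> seq (E3Cvert p' q' w'),
    (forall i, is_path (f u) (f v) (P i) /\ size (P i) <= bd) /\
    (forall i j, i != j -> forall x, x \in interior (f u) (P i) -> x \notin interior (f u) (P j)).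
Proof.
move=> fi fa [P [H1 H2]]; exists (fun i => map f (P i)); split.
  move=> i; have [/and3P [Pa /eqP L U] S] := H1 i; rewrite size_map S; split => //.
  apply/and3P; split.
  - by rewrite path_map; apply: (sub_path _ Pa) => x y /fa.
  - by rewrite last_map L.
  - by rewrite -map_cons map_inj_uniq.
have IE i : interior (f u) (map f (P i)) = map f (interior u (P i)).
  by rewrite /interior belast_map behead_map.
move=> i j Hij x; rewrite !IE => /mapP [y Hy ->]; rewrite mem_map //.
exact: H2 Hij y Hy.
Qed.

Theorem lemma13 (r s t : nat) (u v : E3Cvert r s t) :
  1 <= r -> r <= s -> s <= t ->
  vA u != vA v -> vB u != vB v -> vC u != vC v -> vd u = vd v ->
  exists P : 'I_(2 * r + 2) -> seq (E3Cvert r s t),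
    (forall i, is_path u v (P i) /\ size (P i) <= r + s + t + 4) /\
    (forall i j, i != j -> forall x, x \in interior u (P i) -> x \notin interior u (P j)).
Proof.
move=> h1 h2 h3.
case: u v => [[[A B] C] d] [[[A' B'] C'] d']; rewrite /vA /vB /vC /vd /= => HA HB HC Hd.
subst d'; have [->|[->|->]] := I3 d.
- have := @transport t s r r s t (@psi0 r s t) (C,B,A,i2) (C',B',A',i2) (2 * r + 2) (r + s + t + 4)
    (@psi0_inj r s t) (@psi0_adj r s t).
  apply; have [P [Q1 Q2]] := core (p:=t) (q:=s) (w:=r) h1 (leq_trans h2 h3) HC HB HA.
  exists P; split => // i; have [Q3 Q4] := Q1 i; split => //; rewrite (leq_trans Q4) //; lia.
- have := @transport s r t r s t (@psi1 r s t) (B,A,C,i2) (B',A',C',i2) (2 * r + 2) (r + s + t + 4)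
    (@psi1_inj r s t) (@psi1_adj r s t).
  apply; have [P [Q1 Q2]] := core (p:=s) (q:=r) (w:=t) h1 h2 HB HA HC.
  exists P; split => // i; have [Q3 Q4] := Q1 i; split => //; rewrite (leq_trans Q4) //; lia.
- exact: (core (p:=r) (q:=s) (w:=t) h1 (leqnn r) HA HB HC).
Qed.
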